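(* Let $n_0,n_1\ge 0$ and $m$ be integers with $0<m\le n_0+n_1$, and let $X\sim\mathrm{Hyper}(n_0,n_1;m)$, i.e. $$\mathbb P(X=k)=\frac{\binom{n_0}{k}\binom{n_1}{m-k}}{\binom{n_0+n_1}{m}}.$$ Set $Y=X/(1+m-X)$. Then $$\mathbb E Y=\frac{n_0}{1+n_1}\left(1-\frac{\binom{n_0-1}{m}}{\binom{n_0+n_1}{m}}\right).$$ In particular, $\mathbb E Y\le \frac{n_0}{1+n_1}$ for every such $m$.
   Context: Binomial coefficient conventions: $\binom{0}{0}=1$, and $\binom{n}{k}=0$ if $n<0$, or if $k<0$, or if $k>n$. *)

(* Defs.v *)
From HB Require Import structures.
From mathcomp Require Import all_boot all_order all_algebra.
Set Implicit Arguments. Unset Strict Implicit. Unset Printing Implicit Defensive.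
Import Order.TTheory GRing.Theory Num.Theory.
Local Open Scope ring_scope.

(* P(X = k) for X ~ Hyper(n0, n1; m), for 0 <= k <= m (outside this range the
   probability is 0 by the binomial conventions). *)
Definition hyper_pmf (n0 n1 m k : nat) : rat :=
  ('C(n0, k) * 'C(n1, m - k))%:R / ('C(n0 + n1, m))%:R.

(* E Y with Y = X / (1 + m - X); the support of X is contained in {0,...,m}. *)
Definition hyper_EY (n0 n1 m : nat) : rat :=
  \sum_(k < m.+1) hyper_pmf n0 n1 m k * ((k : nat)%:R / (1 + m - k)%N%:R).

(* Main.v *)
Require Import Defs.
From HB Require Import structures.
From mathcomp Require Import all_boot all_order all_algebra.
From mathcomp Require Import ring lra zify.
Import Order.TTheory GRing.Theory Num.Theory.
Local Open Scope ring_scope.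

Lemma step (n0 n1 m i : nat) (hi : (i < m)%N) (C : rat) (hC : C != 0) :
  ('C(n0, i.+1) * 'C(n1, m - i.+1))%:R / C * ((i.+1)%:R / (1 + m - i.+1)%N%:R)
  = (n0%:R / (1 + n1)%N%:R) * (('C(n0.-1, i) * 'C(n1.+1, m - i))%:R / C).
Proof.
have A := mul_bin_diag n0 i.
have B := mul_bin_diag n1.+1 (m - i.+1).
have E1 : (1 + m - i.+1 = m - i)%N by lia.
have E2 : ((m - i.+1).+1 = m - i)%N by lia.
rewrite E2 /= in B. rewrite E1.
have Hmi : (m - i)%:R != 0 :> rat by rewrite pnatr_eq0; lia.
have Hn1 : (1 + n1)%N%:R != 0 :> rat by rewrite pnatr_eq0.
have B' : ('C(n1.+1, m - i))%:R = (n1.+1)%:R * ('C(n1, m - i.+1))%:R / (m - i)%:R :> rat.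
  by rewrite -natrM B natrM mulrC mulrA mulVf // mul1r.
have A' : (n0%:R * ('C(n0.-1, i))%:R = (i.+1)%:R * ('C(n0, i.+1))%:R :> rat) by rewrite -!natrM A.
transitivity ((n0%:R * ('C(n0.-1, i))%:R) * ('C(n1.+1, m - i))%:R / ((1 + n1)%N%:R * C) : rat); last first.
  rewrite natrM; field. rewrite hC /=; by move: Hn1; rewrite natrD.
rewrite A' B' !natrM. rewrite -addn1 add1n. field. rewrite hC Hmi andbT /=; by move: Hn1; rewrite natrD.
Qed.

Theorem lemma2 (n0 n1 m : nat) (hm0 : (0 < m)%N) (hm : (m <= n0 + n1)%N) :
  hyper_EY n0 n1 m =
    (n0%:R / (1 + n1)%N%:R) *
    (1 - ('C(n0.-1, m))%:R / ('C(n0 + n1, m))%:R)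
  /\ hyper_EY n0 n1 m <= n0%:R / (1 + n1)%N%:R.
Proof.
have hC : ('C(n0 + n1, m))%:R != 0 :> rat by rewrite pnatr_eq0 -lt0n bin_gt0.
have E : hyper_EY n0 n1 m = (n0%:R / (1 + n1)%N%:R) *
    ((\sum_(i < m) 'C(n0.-1, i) * 'C(n1.+1, m - i))%N%:R / ('C(n0 + n1, m))%:R).
  rewrite /hyper_EY big_ord_recl /= mul0r mulr0 add0r natr_sum big_distrl /= big_distrr /=.
  apply: eq_bigr => i _; rewrite /hyper_pmf /bump /= add1n.
  exact: step.
have E2 : n0 = 0%N \/ ((\sum_(i < m) 'C(n0.-1, i) * 'C(n1.+1, m - i)) + 'C(n0.-1, m) = 'C(n0 + n1, m))%N.
  case: n0 {hm hC E} => [|n0]; [by left | right].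
  rewrite addSnnS -(binomial.Vandermonde n0 n1.+1 m) big_ord_recr /= subnn bin0 muln1.
  by [].
have E3 : hyper_EY n0 n1 m =
    (n0%:R / (1 + n1)%N%:R) * (1 - ('C(n0.-1, m))%:R / ('C(n0 + n1, m))%:R).
  rewrite E; case: E2 => [-> | H]; first by rewrite !mul0r.
  rewrite -H natrD; congr (_ * _); field; by rewrite -natrD H.
split => //.
rewrite E3 ler_piMr //; first by rewrite divr_ge0.
by rewrite lerBlDr lerDl divr_ge0.
Qed.
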